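(* For every integer $m \geq 3$, $\gamma_{b,2}(P_m \square C_6) = m + c$, where $c \in \{0,1\}$ if $m \equiv 0 \pmod 4$ and $c = 1$ if $m \equiv 1, 2,$ or $3 \pmod 4$.
   Context: For a graph $G$, a $2$-limited broadcast is a function $f: V(G) \to \{0,1,2\}$. A vertex $u$ hears the broadcast from $v$ if $f(v) > 0$ and $d(u,v) \leq f(v)$, where $d$ is the distance in $G$. The broadcast $f$ is dominating if every vertex of $G$ hears the broadcast from some vertex. The cost of $f$ is $\sum_{v \in V(G)} f(v)$. The $2$-limited broadcast domination number $\gamma_{b,2}(G)$ is the minimum cost of a $2$-limited dominating broadcast on $G$. $C_6$ denotes the cycle on $6$ vertices, $P_m$ the path on $m$ vertices, and $\square$ the Cartesian product of graphs. *)

(* Defs.v *)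
From mathcomp Require Import all_boot.
Set Implicit Arguments. Unset Strict Implicit. Unset Printing Implicit Defensive.

Fixpoint within (V : finType) (e : rel V) (k : nat) (u v : V) : bool :=
  match k with
  | 0 => u == v
  | k'.+1 => within e k' u v || [exists w, e u w && within e k' w v]
  end.

Definition broadcast2 (V : finType) := {ffun V -> 'I_3}.

Definition hears (V : finType) (e : rel V) (f : broadcast2 V) (u v : V) : bool :=
  (0 < f v) && within e (f v) v u.

Definition dominating (V : finType) (e : rel V) (f : broadcast2 V) : bool :=
  [forall u, exists v, hears e f u v].

Definition cost (V : finType) (f : broadcast2 V) : nat := \sum_(v : V) (f v : nat).

(* gamma_{b,2}: minimum cost of a dominating 2-limited broadcast.  The default
   value #|V| of the iterated min is harmless: the broadcast f = 1 everywhere is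
   dominating and has cost #|V|. *)
Definition gamma_b2 (V : finType) (e : rel V) : nat :=
  \big[minn/#|V|]_(f : broadcast2 V | dominating e f) cost f.

Definition path_adj (n : nat) : rel 'I_n :=
  fun i j => (i.+1 == j :> nat) || (j.+1 == i :> nat).
Definition cycle_adj (n : nat) : rel 'I_n :=
  fun a b => (a.+1 %% n == b :> nat) || (b.+1 %% n == a :> nat).

Definition cartesian (V W : finType) (e1 : rel V) (e2 : rel W) : rel (V * W) :=
  fun x y => ((x.1 == y.1) && e2 x.2 y.2) || ((x.2 == y.2) && e1 x.1 y.1).

Definition PmC6 (m : nat) : rel ('I_m * 'I_6) := cartesian (@path_adj m) (@cycle_adj 6).
Arguments PmC6 m : clear implicits.

(* Main.v *)
Require Import Defs.
From mathcomp Require Import all_boot zify.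
Set Implicit Arguments. Unset Strict Implicit. Unset Printing Implicit Defensive.

Record bs := BS { b0 : bool; b1 : bool; b2 : bool; b3 : bool; b4 : bool; b5 : bool }.
Definition bor (x y : bs) := BS (b0 x || b0 y) (b1 x || b1 y) (b2 x || b2 y) (b3 x || b3 y) (b4 x || b4 y) (b5 x || b5 y).
Definition bcompl (x : bs) := BS (~~ b0 x) (~~ b1 x) (~~ b2 x) (~~ b3 x) (~~ b4 x) (~~ b5 x).
Definition bdiff (x y : bs) := BS (b0 x && ~~ b0 y) (b1 x && ~~ b1 y) (b2 x && ~~ b2 y) (b3 x && ~~ b3 y) (b4 x && ~~ b4 y) (b5 x && ~~ b5 y).
Definition bsub (x y : bs) := [&& b0 x ==> b0 y, b1 x ==> b1 y, b2 x ==> b2 y, b3 x ==> b3 y, b4 x ==> b4 y & b5 x ==> b5 y].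
Definition isfull (x : bs) := [&& b0 x, b1 x, b2 x, b3 x, b4 x & b5 x].
Definition isempty (x : bs) := ~~ [|| b0 x, b1 x, b2 x, b3 x, b4 x | b5 x].
Definition bempty := BS false false false false false false.

Record col := Col { k0 : 'I_3; k1 : 'I_3; k2 : 'I_3; k3 : 'I_3; k4 : 'I_3; k5 : 'I_3 }.
Definition get (c : col) (s : nat) : 'I_3 :=
  match s with 0 => k0 c | 1 => k1 c | 2 => k2 c | 3 => k3 c | 4 => k4 c | _ => k5 c end.
Definition absd (a b : nat) := (a - b) + (b - a).
Definition cd (s r : nat) := minn (absd s r) (6 - absd s r).
Definition near (k : 'I_3) (t : nat) := (0 < k) && (t <= k).
Definition covbit (c : col) (d r : nat) :=
  [|| near (get c 0) (d + cd 0 r), near (get c 1) (d + cd 1 r), near (get c 2) (d + cd 2 r),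
      near (get c 3) (d + cd 3 r), near (get c 4) (d + cd 4 r) | near (get c 5) (d + cd 5 r)].
Definition cov (c : col) (d : nat) :=
  BS (covbit c d 0) (covbit c d 1) (covbit c d 2) (covbit c d 3) (covbit c d 4) (covbit c d 5).
Definition ccost (c : col) : nat := k0 c + k1 c + k2 c + k3 c + k4 c + k5 c.

Record st := St { sA : bs; sB : bs; sP : bs; sQ : bs }.
Definition stepc (s : st) (c0 c1 c2 : bs) : option st :=
  if bsub (sA s) c2 then Some (St (bdiff (sB s) c1) (bcompl (bor (sP s) c0)) (bor (sQ s) c1) c2)
  else None.
Definition step (s : st) (e : col) := stepc s (cov e 0) (cov e 1) (cov e 2).
Definition init := St bempty bempty bempty bempty.
Definition accept (s : st) := isempty (sA s) && isempty (sB s).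
Fixpoint arun (s : st) (l : seq col) : option st :=
  match l with [::] => Some s | e :: l' => if step s e is Some s' then arun s' l' else None end.

Inductive trie := TLeaf of option nat | TNode of trie & trie.
Fixpoint tget (t : trie) (k : seq bool) : option nat :=
  match t, k with
  | TNode l r, b :: k' => tget (if b then r else l) k'
  | TLeaf v, [::] => v
  | _, _ => None end.
Fixpoint tins (t : trie) (k : seq bool) (v : nat) : trie :=
  match k with
  | [::] => TLeaf (Some v)
  | b :: k' => match t with
     | TNode l r => if b then TNode l (tins r k' v) else TNode (tins l k' v) r
     | TLeaf _ => if b then TNode (TLeaf None) (tins (TLeaf None) k' v)
                  else TNode (tins (TLeaf None) k' v) (TLeaf None) end end.
Fixpoint tall (P : seq bool -> nat -> bool) (t : trie) : bool :=
  match t with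
  | TLeaf (Some v) => P [::] v
  | TLeaf None => true
  | TNode l r => tall (fun k => P (false :: k)) l && tall (fun k => P (true :: k)) r end.

Definition encbs (x : bs) := [:: b0 x; b1 x; b2 x; b3 x; b4 x; b5 x].
Definition encode (s : st) := encbs (sA s) ++ encbs (sB s) ++ encbs (sP s) ++ encbs (sQ s).
Definition decode (k : seq bool) : st :=
  match k with
  | [:: a0; a1; a2; a3; a4; a5; c0; c1; c2; c3; c4; c5; p0; p1; p2; p3; p4; p5; q0; q1; q2; q3; q4; q5] =>
    St (BS a0 a1 a2 a3 a4 a5) (BS c0 c1 c2 c3 c4 c5) (BS p0 p1 p2 p3 p4 p5) (BS q0 q1 q2 q3 q4 q5)
  | _ => init end.
Definition nat2bs (n : nat) :=
  BS (odd n) (odd n./2) (odd n./2./2) (odd n./2./2./2) (odd n./2./2./2./2) (odd n./2./2./2./2./2).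
Definition entries : seq (nat*nat*nat*nat*nat) := [:: (0,0,0,0,2); (0,0,1,0,2); (0,0,2,0,2); (0,0,3,0,2); (0,0,4,0,2); (0,0,5,0,2); (0,0,6,0,2); (0,0,7,0,2); (0,0,7,2,2); (0,0,8,0,2); (0,0,9,0,2); (0,0,10,0,2); (0,0,11,0,2); (0,0,12,0,2); (0,0,13,0,2); (0,0,14,0,2); (0,0,14,4,2); (0,0,15,0,2); (0,0,15,2,2); (0,0,15,4,2); (0,0,15,6,2); (0,0,16,0,2); (0,0,17,0,2); (0,0,18,0,2); (0,0,19,0,2); (0,0,20,0,2); (0,0,21,0,2); (0,0,22,0,2); (0,0,23,0,2); (0,0,23,2,2); (0,0,24,0,2); (0,0,25,0,2); (0,0,26,0,2); (0,0,27,0,2); (0,0,28,0,2); (0,0,28,8,2); (0,0,29,0,2); (0,0,29,8,2); (0,0,30,0,2); (0,0,30,4,2); (0,0,30,8,2); (0,0,30,12,2); (0,0,31,0,2); (0,0,31,2,2); (0,0,31,4,2); (0,0,31,6,2); (0,0,31,8,2); (0,0,31,10,2); (0,0,31,12,2); (0,0,31,14,1); (0,0,32,0,2); (0,0,33,0,2); (0,0,34,0,2); (0,0,35,0,2); (0,0,35,1,2); (0,0,36,0,2); (0,0,37,0,2); (0,0,38,0,2); (0,0,39,0,2); (0,0,39,1,2); (0,0,39,2,2); (0,0,39,3,2); (0,0,40,0,2); (0,0,41,0,2); (0,0,42,0,2); (0,0,43,0,2); (0,0,43,1,2); (0,0,44,0,2); (0,0,45,0,2); (0,0,46,0,2); (0,0,46,4,2);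 (0,0,47,0,2); (0,0,47,1,2); (0,0,47,2,2); (0,0,47,3,2); (0,0,47,4,2); (0,0,47,5,2); (0,0,47,6,2); (0,0,47,7,1); (0,0,48,0,2); (0,0,49,0,2); (0,0,49,32,2); (0,0,50,0,2); (0,0,51,0,2); (0,0,51,1,2); (0,0,51,32,2); (0,0,51,33,2); (0,0,52,0,2); (0,0,53,0,2); (0,0,53,32,2); (0,0,54,0,2); (0,0,55,0,2); (0,0,55,1,2); (0,0,55,2,2); (0,0,55,3,2); (0,0,55,32,2); (0,0,55,33,2); (0,0,55,34,2); (0,0,55,35,1); (0,0,56,0,2); (0,0,56,16,2); (0,0,57,0,2); (0,0,57,16,2); (0,0,57,32,2); (0,0,57,48,2); (0,0,58,0,2); (0,0,58,16,2); (0,0,59,0,2); (0,0,59,1,2); (0,0,59,16,2); (0,0,59,17,2); (0,0,59,32,2); (0,0,59,33,2); (0,0,59,48,2); (0,0,59,49,1); (0,0,60,0,2); (0,0,60,8,2); (0,0,60,16,2); (0,0,60,24,2); (0,0,61,0,2); (0,0,61,8,2); (0,0,61,16,2); (0,0,61,24,2); (0,0,61,32,2); (0,0,61,40,2); (0,0,61,48,2); (0,0,61,56,1); (0,0,62,0,2); (0,0,62,4,2); (0,0,62,8,2); (0,0,62,12,2); (0,0,62,16,2); (0,0,62,20,2); (0,0,62,24,2); (0,0,62,28,1); (0,0,63,0,1); (0,0,63,1,1); (0,0,63,2,1); (0,0,63,3,1); (0,0,63,4,1); (0,0,63,5,1); (0,0,63,6,1); (0,0,63,7,1); (0,0,63,8,1);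 (0,0,63,9,1); (0,0,63,10,1); (0,0,63,11,1); (0,0,63,12,1); (0,0,63,13,1); (0,0,63,14,1); (0,0,63,15,1); (0,0,63,16,1); (0,0,63,17,1); (0,0,63,18,1); (0,0,63,19,1); (0,0,63,20,1); (0,0,63,21,1); (0,0,63,22,1); (0,0,63,23,1); (0,0,63,24,1); (0,0,63,25,1); (0,0,63,26,1); (0,0,63,27,1); (0,0,63,28,1); (0,0,63,29,1); (0,0,63,30,1); (0,0,63,31,1); (0,0,63,32,1); (0,0,63,33,1); (0,0,63,34,1); (0,0,63,35,1); (0,0,63,36,1); (0,0,63,37,1); (0,0,63,38,1); (0,0,63,39,1); (0,0,63,40,1); (0,0,63,41,1); (0,0,63,42,1); (0,0,63,43,1); (0,0,63,44,1); (0,0,63,45,1); (0,0,63,46,1); (0,0,63,47,1); (0,0,63,48,1); (0,0,63,49,1); (0,0,63,50,1); (0,0,63,51,1); (0,0,63,52,1); (0,0,63,53,1); (0,0,63,54,1); (0,0,63,55,1); (0,0,63,56,1); (0,0,63,57,1); (0,0,63,58,1); (0,0,63,59,1); (0,0,63,60,1); (0,0,63,61,1); (0,0,63,62,1); (0,0,63,63,0); (0,1,0,0,3); (0,1,4,0,3); (0,1,8,0,3); (0,1,12,0,3); (0,1,16,0,3); (0,1,20,0,3); (0,1,24,0,3); (0,1,28,0,2); (0,1,28,8,2); (0,2,0,0,3); (0,2,8,0,3); (0,2,16,0,3); (0,2,24,0,3); (0,2,32,0,3); (0,2,40,0,3); (0,2,48,0,3); (0,2,56,0,2); (0,2,56,16,2);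 (0,3,0,0,3); (0,3,8,0,3); (0,3,16,0,3); (0,3,24,0,3); (0,4,0,0,3); (0,4,1,0,3); (0,4,16,0,3); (0,4,17,0,3); (0,4,32,0,3); (0,4,33,0,3); (0,4,48,0,3); (0,4,49,0,2); (0,4,49,32,2); (0,5,0,0,3); (0,5,16,0,3); (0,6,0,0,3); (0,6,16,0,3); (0,6,32,0,3); (0,6,48,0,3); (0,7,0,0,3); (0,7,16,0,3); (0,8,0,0,3); (0,8,1,0,3); (0,8,2,0,3); (0,8,3,0,3); (0,8,32,0,3); (0,8,33,0,3); (0,8,34,0,3); (0,8,35,0,2); (0,8,35,1,2); (0,9,0,0,3); (0,10,0,0,3); (0,10,32,0,3); (0,11,0,0,4); (0,12,0,0,3); (0,12,1,0,3); (0,12,32,0,3); (0,12,33,0,3); (0,13,0,0,4); (0,14,0,0,3); (0,14,32,0,3); (0,15,0,0,4); (0,16,0,0,3); (0,16,1,0,3); (0,16,2,0,3); (0,16,3,0,3); (0,16,4,0,3); (0,16,5,0,3); (0,16,6,0,3); (0,16,7,0,2); (0,16,7,2,2); (0,17,0,0,3); (0,17,4,0,3); (0,18,0,0,3); (0,19,0,0,4); (0,20,0,0,3); (0,20,1,0,3); (0,21,0,0,4); (0,22,0,0,4); (0,23,0,0,4); (0,24,0,0,3); (0,24,1,0,3); (0,24,2,0,3); (0,24,3,0,3); (0,25,0,0,4); (0,26,0,0,4); (0,27,0,0,4); (0,28,0,0,3); (0,28,1,0,3); (0,29,0,0,4); (0,30,0,0,4); (0,31,0,0,4); (0,32,0,0,3);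 (0,32,2,0,3); (0,32,4,0,3); (0,32,6,0,3); (0,32,8,0,3); (0,32,10,0,3); (0,32,12,0,3); (0,32,14,0,2); (0,32,14,4,2); (0,33,0,0,3); (0,33,4,0,3); (0,33,8,0,3); (0,33,12,0,3); (0,34,0,0,3); (0,34,8,0,3); (0,35,0,0,3); (0,35,8,0,3); (0,36,0,0,3); (0,37,0,0,4); (0,38,0,0,4); (0,39,0,0,4); (0,40,0,0,3); (0,40,2,0,3); (0,41,0,0,4); (0,42,0,0,4); (0,43,0,0,4); (0,44,0,0,4); (0,45,0,0,4); (0,46,0,0,4); (0,47,0,0,4); (0,48,0,0,3); (0,48,2,0,3); (0,48,4,0,3); (0,48,6,0,3); (0,49,0,0,3); (0,49,4,0,3); (0,50,0,0,4); (0,51,0,0,4); (0,52,0,0,4); (0,53,0,0,4); (0,54,0,0,4); (0,55,0,0,4); (0,56,0,0,3); (0,56,2,0,3); (0,57,0,0,4); (0,58,0,0,4); (0,59,0,0,4); (0,60,0,0,4); (0,61,0,0,4); (0,62,0,0,4); (0,63,0,0,4); (1,0,18,0,3); (1,0,22,0,3); (1,0,26,0,3); (1,0,30,0,3); (1,0,30,4,3); (1,0,30,8,3); (1,0,30,12,3); (1,0,34,0,3); (1,0,36,0,3); (1,0,38,0,3); (1,0,42,0,3); (1,0,44,0,3); (1,0,46,0,3); (1,0,46,4,3); (1,0,50,0,3); (1,0,52,0,3); (1,0,54,0,3); (1,0,58,0,3); (1,0,58,16,3); (1,0,60,0,3); (1,0,60,8,3); (1,0,60,16,3); (1,0,60,24,3);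 (1,0,62,0,3); (1,0,62,4,3); (1,0,62,8,3); (1,0,62,12,3); (1,0,62,16,3); (1,0,62,20,3); (1,0,62,24,3); (1,0,62,28,2); (1,1,20,0,3); (1,1,28,0,3); (1,1,28,8,3); (1,2,32,0,3); (1,2,40,0,3); (1,2,48,0,3); (1,2,56,0,3); (1,2,56,16,3); (1,3,16,0,3); (1,3,24,0,3); (1,6,32,0,4); (1,6,48,0,4); (1,7,16,0,4); (1,8,34,0,4); (1,10,32,0,4); (1,14,32,0,4); (1,32,2,0,3); (1,32,6,0,3); (1,32,10,0,3); (1,32,14,0,3); (1,32,14,4,3); (1,33,4,0,3); (1,33,12,0,3); (1,35,0,0,3); (1,35,8,0,3); (1,39,0,0,4); (1,40,2,0,4); (1,43,0,0,4); (1,47,0,0,4); (1,48,2,0,4); (1,48,6,0,4); (1,49,4,0,4); (1,51,0,0,4); (1,55,0,0,4); (1,56,2,0,4); (1,59,0,0,4); (1,63,0,0,4); (2,0,5,0,3); (2,0,9,0,3); (2,0,13,0,3); (2,0,21,0,3); (2,0,25,0,3); (2,0,29,0,3); (2,0,29,8,3); (2,0,36,0,3); (2,0,37,0,3); (2,0,41,0,3); (2,0,44,0,3); (2,0,45,0,3); (2,0,52,0,3); (2,0,53,0,3); (2,0,53,32,3); (2,0,57,0,3); (2,0,57,16,3); (2,0,57,32,3); (2,0,57,48,3); (2,0,60,0,3); (2,0,60,8,3); (2,0,60,16,3); (2,0,60,24,3); (2,0,61,0,3); (2,0,61,8,3); (2,0,61,16,3); (2,0,61,24,3); (2,0,61,32,3);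 (2,0,61,40,3); (2,0,61,48,3); (2,0,61,56,2); (2,1,4,0,3); (2,1,12,0,3); (2,1,20,0,3); (2,1,28,0,3); (2,1,28,8,3); (2,2,40,0,3); (2,2,56,0,3); (2,2,56,16,3); (2,3,8,0,3); (2,3,24,0,3); (2,4,1,0,3); (2,4,17,0,3); (2,4,33,0,3); (2,4,49,0,3); (2,4,49,32,3); (2,6,32,0,3); (2,6,48,0,3); (2,7,0,0,3); (2,7,16,0,3); (2,12,1,0,4); (2,12,33,0,4); (2,14,32,0,4); (2,15,0,0,4); (2,16,5,0,4); (2,17,4,0,4); (2,20,1,0,4); (2,23,0,0,4); (2,28,1,0,4); (2,31,0,0,4); (2,33,4,0,4); (2,33,12,0,4); (2,35,8,0,4); (2,39,0,0,4); (2,47,0,0,4); (2,49,4,0,4); (2,55,0,0,4); (2,63,0,0,4); (3,0,36,0,5); (3,0,44,0,5); (3,0,52,0,5); (3,0,60,0,5); (3,0,60,8,5); (3,0,60,16,5); (3,0,60,24,4); (3,1,20,0,5); (3,1,28,0,5); (3,1,28,8,5); (3,2,40,0,5); (3,2,56,0,5); (3,2,56,16,5); (3,3,24,0,5); (3,6,32,0,5); (3,6,48,0,5); (3,7,16,0,5); (3,14,32,0,6); (3,33,4,0,5); (3,33,12,0,5); (3,35,8,0,5); (3,39,0,0,5); (3,47,0,0,6); (3,49,4,0,6); (3,55,0,0,6); (3,63,0,0,6); (4,0,9,0,3); (4,0,10,0,3); (4,0,11,0,3); (4,0,18,0,3); (4,0,19,0,3); (4,0,25,0,3); (4,0,26,0,3);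 (4,0,27,0,3); (4,0,41,0,3); (4,0,42,0,3); (4,0,43,0,3); (4,0,43,1,3); (4,0,50,0,3); (4,0,51,0,3); (4,0,51,1,3); (4,0,51,32,3); (4,0,51,33,3); (4,0,57,0,3); (4,0,57,16,3); (4,0,57,32,3); (4,0,57,48,3); (4,0,58,0,3); (4,0,58,16,3); (4,0,59,0,3); (4,0,59,1,3); (4,0,59,16,3); (4,0,59,17,3); (4,0,59,32,3); (4,0,59,33,3); (4,0,59,48,3); (4,0,59,49,2); (4,2,8,0,3); (4,2,24,0,3); (4,2,40,0,3); (4,2,56,0,3); (4,2,56,16,3); (4,3,8,0,4); (4,3,24,0,4); (4,4,17,0,3); (4,4,49,0,3); (4,4,49,32,3); (4,6,16,0,3); (4,6,48,0,3); (4,7,16,0,4); (4,8,2,0,3); (4,8,3,0,3); (4,8,34,0,3); (4,8,35,0,3); (4,8,35,1,3); (4,12,1,0,3); (4,12,33,0,3); (4,14,0,0,3); (4,14,32,0,3); (4,15,0,0,4); (4,24,2,0,4); (4,24,3,0,4); (4,28,1,0,4); (4,30,0,0,4); (4,31,0,0,4); (4,32,10,0,4); (4,34,8,0,4); (4,35,8,0,4); (4,40,2,0,4); (4,46,0,0,4); (4,47,0,0,4); (4,56,2,0,4); (4,62,0,0,4); (4,63,0,0,4); (5,0,18,0,5); (5,0,26,0,5); (5,0,42,0,5); (5,0,50,0,5); (5,0,58,0,5); (5,0,58,16,4); (5,2,40,0,5); (5,2,56,0,5); (5,2,56,16,4); (5,3,24,0,5); (5,6,48,0,5); (5,7,16,0,5);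 (5,8,34,0,5); (5,14,32,0,5); (5,32,10,0,5); (5,35,8,0,5); (5,40,2,0,5); (5,47,0,0,5); (5,56,2,0,5); (5,63,0,0,5); (6,0,9,0,5); (6,0,25,0,5); (6,0,41,0,5); (6,0,57,0,5); (6,0,57,16,5); (6,0,57,32,5); (6,0,57,48,4); (6,2,40,0,5); (6,2,56,0,5); (6,2,56,16,5); (6,3,8,0,5); (6,3,24,0,5); (6,4,17,0,5); (6,4,49,0,5); (6,4,49,32,5); (6,6,48,0,5); (6,7,16,0,5); (6,12,1,0,5); (6,12,33,0,5); (6,14,32,0,5); (6,15,0,0,5); (6,28,1,0,6); (6,31,0,0,6); (6,35,8,0,6); (6,47,0,0,6); (6,63,0,0,6); (7,2,40,0,6); (7,2,56,0,6); (7,2,56,16,6); (7,3,24,0,6); (7,6,48,0,6); (7,7,16,0,6); (7,14,32,0,6); (7,35,8,0,6); (7,47,0,0,6); (7,63,0,0,7); (8,0,18,0,3); (8,0,19,0,3); (8,0,20,0,3); (8,0,21,0,3); (8,0,22,0,3); (8,0,23,0,3); (8,0,23,2,3); (8,0,36,0,3); (8,0,37,0,3); (8,0,38,0,3); (8,0,39,0,3); (8,0,39,1,3); (8,0,39,2,3); (8,0,39,3,3); (8,0,50,0,3); (8,0,51,0,3); (8,0,51,1,3); (8,0,51,32,3); (8,0,51,33,3); (8,0,52,0,3); (8,0,53,0,3); (8,0,53,32,3); (8,0,54,0,3); (8,0,55,0,3); (8,0,55,1,3); (8,0,55,2,3); (8,0,55,3,3); (8,0,55,32,3); (8,0,55,33,3);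 (8,0,55,34,3); (8,0,55,35,2); (8,1,20,0,4); (8,4,16,0,3); (8,4,17,0,3); (8,4,48,0,3); (8,4,49,0,3); (8,4,49,32,3); (8,5,16,0,4); (8,6,16,0,4); (8,6,48,0,4); (8,7,16,0,4); (8,8,34,0,3); (8,8,35,0,3); (8,8,35,1,3); (8,12,32,0,3); (8,12,33,0,3); (8,14,32,0,4); (8,16,4,0,3); (8,16,5,0,3); (8,16,6,0,3); (8,16,7,0,3); (8,16,7,2,3); (8,17,4,0,4); (8,24,2,0,3); (8,24,3,0,3); (8,28,0,0,3); (8,28,1,0,3); (8,29,0,0,4); (8,30,0,0,4); (8,31,0,0,4); (8,48,4,0,4); (8,48,6,0,4); (8,49,4,0,4); (8,56,2,0,4); (8,60,0,0,4); (8,61,0,0,4); (8,62,0,0,4); (8,63,0,0,4); (9,0,18,0,4); (9,0,22,0,4); (9,0,36,0,4); (9,0,38,0,4); (9,0,50,0,4); (9,0,52,0,4); (9,0,54,0,4); (9,1,20,0,4); (9,6,48,0,4); (9,7,16,0,4); (9,8,34,0,4); (9,14,32,0,4); (9,48,6,0,4); (9,49,4,0,4); (9,56,2,0,4); (9,63,0,0,4); (10,0,21,0,5); (10,0,36,0,5); (10,0,37,0,5); (10,0,52,0,5); (10,0,53,0,5); (10,0,53,32,4); (10,1,20,0,5); (10,4,17,0,5); (10,4,49,0,5); (10,4,49,32,4); (10,6,48,0,5); (10,7,16,0,5); (10,12,33,0,5); (10,14,32,0,5); (10,16,5,0,5); (10,17,4,0,5); (10,28,1,0,5); (10,31,0,0,5);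 (10,49,4,0,5); (10,63,0,0,5); (11,0,36,0,6); (11,0,52,0,6); (11,1,20,0,6); (11,6,48,0,6); (11,7,16,0,6); (11,14,32,0,6); (11,49,4,0,6); (11,63,0,0,6); (12,0,18,0,5); (12,0,19,0,5); (12,0,50,0,5); (12,0,51,0,5); (12,0,51,1,5); (12,0,51,32,5); (12,0,51,33,4); (12,4,17,0,5); (12,4,49,0,5); (12,4,49,32,5); (12,6,16,0,5); (12,6,48,0,5); (12,7,16,0,6); (12,8,34,0,5); (12,8,35,0,5); (12,8,35,1,5); (12,12,33,0,5); (12,14,32,0,5); (12,24,2,0,5); (12,24,3,0,5); (12,28,1,0,5); (12,30,0,0,5); (12,31,0,0,6); (12,56,2,0,6); (12,62,0,0,6); (12,63,0,0,6); (13,0,18,0,6); (13,0,50,0,6); (13,6,48,0,6); (13,7,16,0,6); (13,8,34,0,6); (13,14,32,0,6); (13,56,2,0,6); (13,63,0,0,6); (14,4,17,0,6); (14,4,49,0,6); (14,4,49,32,6); (14,6,48,0,6); (14,7,16,0,6); (14,12,33,0,6); (14,14,32,0,6); (14,28,1,0,6); (14,31,0,0,6); (14,63,0,0,7); (15,6,48,0,8); (15,7,16,0,8); (15,14,32,0,8); (15,63,0,0,8); (16,0,9,0,3); (16,0,11,0,3); (16,0,13,0,3); (16,0,15,0,3); (16,0,15,2,3); (16,0,15,4,3); (16,0,15,6,3); (16,0,36,0,3); (16,0,37,0,3); (16,0,38,0,3); (16,0,39,0,3); (16,0,39,1,3); (16,0,39,2,3); (16,0,39,3,3); (16,0,40,0,3);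 (16,0,41,0,3); (16,0,42,0,3); (16,0,43,0,3); (16,0,43,1,3); (16,0,44,0,3); (16,0,45,0,3); (16,0,46,0,3); (16,0,46,4,3); (16,0,47,0,3); (16,0,47,1,3); (16,0,47,2,3); (16,0,47,3,3); (16,0,47,4,3); (16,0,47,5,3); (16,0,47,6,3); (16,0,47,7,2); (16,2,40,0,4); (16,8,32,0,3); (16,8,33,0,3); (16,8,34,0,3); (16,8,35,0,3); (16,8,35,1,3); (16,10,32,0,4); (16,12,32,0,4); (16,12,33,0,4); (16,14,32,0,4); (16,16,5,0,3); (16,16,7,0,3); (16,16,7,2,3); (16,24,1,0,3); (16,24,3,0,3); (16,28,1,0,4); (16,32,8,0,3); (16,32,10,0,3); (16,32,12,0,3); (16,32,14,0,3); (16,32,14,4,3); (16,33,8,0,4); (16,33,12,0,4); (16,34,8,0,4); (16,35,8,0,4); (16,48,4,0,3); (16,48,6,0,3); (16,49,4,0,4); (16,56,0,0,3); (16,56,2,0,3); (16,57,0,0,4); (16,58,0,0,4); (16,59,0,0,4); (16,60,0,0,4); (16,61,0,0,4); (16,62,0,0,4); (16,63,0,0,4); (17,0,36,0,5); (17,0,38,0,5); (17,0,42,0,5); (17,0,44,0,5); (17,0,46,0,5); (17,0,46,4,4); (17,2,40,0,5); (17,8,34,0,5); (17,10,32,0,5); (17,14,32,0,5); (17,32,10,0,5); (17,32,14,0,5); (17,32,14,4,4); (17,33,12,0,5); (17,35,8,0,5); (17,48,6,0,5); (17,49,4,0,5); (17,56,2,0,5); (17,59,0,0,5); (17,63,0,0,5);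 (18,0,9,0,4); (18,0,13,0,4); (18,0,36,0,4); (18,0,37,0,4); (18,0,41,0,4); (18,0,44,0,4); (18,0,45,0,4); (18,2,40,0,4); (18,12,33,0,4); (18,14,32,0,4); (18,16,5,0,4); (18,28,1,0,4); (18,33,12,0,4); (18,35,8,0,4); (18,49,4,0,4); (18,63,0,0,4); (19,0,36,0,6); (19,0,44,0,6); (19,2,40,0,6); (19,14,32,0,6); (19,33,12,0,6); (19,35,8,0,6); (19,49,4,0,6); (19,63,0,0,6); (20,0,9,0,5); (20,0,11,0,5); (20,0,41,0,5); (20,0,42,0,5); (20,0,43,0,5); (20,0,43,1,4); (20,2,40,0,5); (20,8,34,0,5); (20,8,35,0,5); (20,8,35,1,4); (20,12,33,0,5); (20,14,32,0,5); (20,24,3,0,5); (20,28,1,0,5); (20,32,10,0,5); (20,34,8,0,5); (20,35,8,0,5); (20,56,2,0,5); (20,62,0,0,5); (20,63,0,0,5); (21,0,42,0,6); (21,2,40,0,6); (21,8,34,0,6); (21,14,32,0,6); (21,32,10,0,6); (21,35,8,0,6); (21,56,2,0,6); (21,63,0,0,6); (22,0,9,0,6); (22,0,41,0,6); (22,2,40,0,6); (22,12,33,0,6); (22,14,32,0,6); (22,28,1,0,6); (22,35,8,0,6); (22,63,0,0,6); (23,2,40,0,8); (23,14,32,0,8); (23,35,8,0,8); (23,63,0,0,8); (24,0,36,0,5); (24,0,37,0,5); (24,0,38,0,5); (24,0,39,0,5); (24,0,39,1,5); (24,0,39,2,5); (24,0,39,3,4); (24,8,34,0,5); (24,8,35,0,5);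 (24,8,35,1,5); (24,12,32,0,5); (24,12,33,0,5); (24,14,32,0,6); (24,16,5,0,5); (24,16,7,0,5); (24,16,7,2,5); (24,24,3,0,5); (24,28,1,0,5); (24,48,4,0,5); (24,48,6,0,5); (24,49,4,0,6); (24,56,2,0,5); (24,60,0,0,5); (24,61,0,0,6); (24,62,0,0,6); (24,63,0,0,6); (25,0,36,0,6); (25,0,38,0,6); (25,8,34,0,6); (25,14,32,0,6); (25,48,6,0,6); (25,49,4,0,6); (25,56,2,0,6); (25,63,0,0,6); (26,0,36,0,6); (26,0,37,0,6); (26,12,33,0,6); (26,14,32,0,6); (26,16,5,0,6); (26,28,1,0,6); (26,49,4,0,6); (26,63,0,0,6); (27,0,36,0,8); (27,14,32,0,8); (27,49,4,0,8); (27,63,0,0,8); (28,8,34,0,6); (28,8,35,0,6); (28,8,35,1,6); (28,12,33,0,6); (28,14,32,0,6); (28,24,3,0,6); (28,28,1,0,6); (28,56,2,0,6); (28,62,0,0,6); (28,63,0,0,7); (29,8,34,0,8); (29,14,32,0,8); (29,56,2,0,8); (29,63,0,0,8); (30,12,33,0,8); (30,14,32,0,8); (30,28,1,0,8); (30,63,0,0,8); (31,14,32,0,10); (31,63,0,0,10); (32,0,9,0,3); (32,0,11,0,3); (32,0,13,0,3); (32,0,15,0,3); (32,0,15,2,3); (32,0,15,4,3); (32,0,15,6,3); (32,0,17,0,3); (32,0,18,0,3); (32,0,19,0,3); (32,0,21,0,3); (32,0,22,0,3); (32,0,23,0,3); (32,0,23,2,3); (32,0,25,0,3); (32,0,26,0,3);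 (32,0,27,0,3); (32,0,29,0,3); (32,0,29,8,3); (32,0,30,0,3); (32,0,30,4,3); (32,0,30,8,3); (32,0,30,12,3); (32,0,31,0,3); (32,0,31,2,3); (32,0,31,4,3); (32,0,31,6,3); (32,0,31,8,3); (32,0,31,10,3); (32,0,31,12,3); (32,0,31,14,2); (32,1,16,0,3); (32,1,20,0,3); (32,1,24,0,3); (32,1,28,0,3); (32,1,28,8,3); (32,3,16,0,4); (32,3,24,0,4); (32,4,17,0,4); (32,5,16,0,4); (32,7,16,0,4); (32,16,1,0,3); (32,16,3,0,3); (32,16,5,0,3); (32,16,7,0,3); (32,16,7,2,3); (32,20,1,0,4); (32,24,1,0,4); (32,24,3,0,4); (32,28,1,0,4); (32,32,10,0,3); (32,32,14,0,3); (32,32,14,4,3); (32,33,8,0,3); (32,33,12,0,3); (32,35,8,0,4); (32,48,2,0,3); (32,48,6,0,3); (32,49,0,0,3); (32,49,4,0,3); (32,51,0,0,4); (32,53,0,0,4); (32,55,0,0,4); (32,56,2,0,4); (32,57,0,0,4); (32,59,0,0,4); (32,61,0,0,4); (32,63,0,0,4); (33,0,18,0,5); (33,0,22,0,5); (33,0,26,0,5); (33,0,30,0,5); (33,0,30,4,5); (33,0,30,8,5); (33,0,30,12,4); (33,1,20,0,5); (33,1,28,0,5); (33,1,28,8,5); (33,3,16,0,5); (33,3,24,0,5); (33,7,16,0,6); (33,32,10,0,5); (33,32,14,0,5); (33,32,14,4,5); (33,33,12,0,5); (33,35,8,0,5); (33,48,2,0,5); (33,48,6,0,5); (33,49,4,0,5);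 (33,51,0,0,5); (33,55,0,0,6); (33,56,2,0,6); (33,59,0,0,6); (33,63,0,0,6); (34,0,9,0,5); (34,0,13,0,5); (34,0,21,0,5); (34,0,25,0,5); (34,0,29,0,5); (34,0,29,8,4); (34,1,20,0,5); (34,1,28,0,5); (34,1,28,8,4); (34,3,24,0,5); (34,4,17,0,5); (34,7,16,0,5); (34,16,5,0,5); (34,20,1,0,5); (34,28,1,0,5); (34,33,12,0,5); (34,35,8,0,5); (34,49,4,0,5); (34,55,0,0,5); (34,63,0,0,5); (35,1,20,0,6); (35,1,28,0,6); (35,1,28,8,6); (35,3,24,0,6); (35,7,16,0,6); (35,33,12,0,6); (35,35,8,0,6); (35,49,4,0,6); (35,55,0,0,6); (35,63,0,0,7); (36,0,9,0,4); (36,0,11,0,4); (36,0,18,0,4); (36,0,19,0,4); (36,0,25,0,4); (36,0,26,0,4); (36,0,27,0,4); (36,3,24,0,4); (36,4,17,0,4); (36,7,16,0,4); (36,24,3,0,4); (36,28,1,0,4); (36,32,10,0,4); (36,35,8,0,4); (36,56,2,0,4); (36,63,0,0,4); (37,0,18,0,6); (37,0,26,0,6); (37,3,24,0,6); (37,7,16,0,6); (37,32,10,0,6); (37,35,8,0,6); (37,56,2,0,6); (37,63,0,0,6); (38,0,9,0,6); (38,0,25,0,6); (38,3,24,0,6); (38,4,17,0,6); (38,7,16,0,6); (38,28,1,0,6); (38,35,8,0,6); (38,63,0,0,6); (39,3,24,0,8); (39,7,16,0,8); (39,35,8,0,8); (39,63,0,0,8); (40,0,18,0,5); (40,0,19,0,5);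 (40,0,21,0,5); (40,0,22,0,5); (40,0,23,0,5); (40,0,23,2,4); (40,1,20,0,5); (40,4,17,0,5); (40,5,16,0,5); (40,7,16,0,5); (40,16,5,0,5); (40,16,7,0,5); (40,16,7,2,4); (40,24,3,0,5); (40,28,1,0,5); (40,48,6,0,5); (40,49,4,0,5); (40,56,2,0,5); (40,61,0,0,5); (40,63,0,0,5); (41,0,18,0,6); (41,0,22,0,6); (41,1,20,0,6); (41,7,16,0,6); (41,48,6,0,6); (41,49,4,0,6); (41,56,2,0,6); (41,63,0,0,6); (42,0,21,0,6); (42,1,20,0,6); (42,4,17,0,6); (42,7,16,0,6); (42,16,5,0,6); (42,28,1,0,6); (42,49,4,0,6); (42,63,0,0,6); (43,1,20,0,8); (43,7,16,0,8); (43,49,4,0,8); (43,63,0,0,8); (44,0,18,0,6); (44,0,19,0,6); (44,4,17,0,6); (44,7,16,0,6); (44,24,3,0,6); (44,28,1,0,6); (44,56,2,0,6); (44,63,0,0,6); (45,0,18,0,8); (45,7,16,0,8); (45,56,2,0,8); (45,63,0,0,8); (46,4,17,0,8); (46,7,16,0,8); (46,28,1,0,8); (46,63,0,0,8); (47,7,16,0,10); (47,63,0,0,10); (48,0,9,0,5); (48,0,11,0,5); (48,0,13,0,5); (48,0,15,0,5); (48,0,15,2,5); (48,0,15,4,5); (48,0,15,6,4); (48,16,5,0,5); (48,16,7,0,5); (48,16,7,2,5); (48,24,1,0,5); (48,24,3,0,5); (48,28,1,0,6); (48,32,10,0,5); (48,32,14,0,5); (48,32,14,4,5); (48,33,8,0,5);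 (48,33,12,0,5); (48,35,8,0,6); (48,48,6,0,5); (48,49,4,0,5); (48,56,2,0,5); (48,57,0,0,5); (48,59,0,0,6); (48,61,0,0,6); (48,63,0,0,6); (49,32,10,0,6); (49,32,14,0,6); (49,32,14,4,6); (49,33,12,0,6); (49,35,8,0,6); (49,48,6,0,6); (49,49,4,0,6); (49,56,2,0,6); (49,59,0,0,6); (49,63,0,0,7); (50,0,9,0,6); (50,0,13,0,6); (50,16,5,0,6); (50,28,1,0,6); (50,33,12,0,6); (50,35,8,0,6); (50,49,4,0,6); (50,63,0,0,6); (51,33,12,0,8); (51,35,8,0,8); (51,49,4,0,8); (51,63,0,0,8); (52,0,9,0,6); (52,0,11,0,6); (52,24,3,0,6); (52,28,1,0,6); (52,32,10,0,6); (52,35,8,0,6); (52,56,2,0,6); (52,63,0,0,6); (53,32,10,0,8); (53,35,8,0,8); (53,56,2,0,8); (53,63,0,0,8); (54,0,9,0,8); (54,28,1,0,8); (54,35,8,0,8); (54,63,0,0,8); (55,35,8,0,10); (55,63,0,0,10); (56,16,5,0,6); (56,16,7,0,6); (56,16,7,2,6); (56,24,3,0,6); (56,28,1,0,6); (56,48,6,0,6); (56,49,4,0,6); (56,56,2,0,6); (56,61,0,0,6); (56,63,0,0,7); (57,48,6,0,8); (57,49,4,0,8); (57,56,2,0,8); (57,63,0,0,8); (58,16,5,0,8); (58,28,1,0,8); (58,49,4,0,8); (58,63,0,0,8); (59,49,4,0,10); (59,63,0,0,10); (60,24,3,0,8); (60,28,1,0,8); (60,56,2,0,8); (60,63,0,0,8);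 (61,56,2,0,10); (61,63,0,0,10); (62,28,1,0,10); (62,63,0,0,10); (63,63,0,0,11)].
Definition table : trie :=
  foldl (fun t (x : nat*nat*nat*nat*nat) => let: (a, b, p, q, v) := x in
     tins t (encode (St (nat2bs a) (nat2bs b) (nat2bs p) (nat2bs q))) v) (TLeaf None) entries.
Definition OFF := 2.
Definition ord3 : seq 'I_3 := [:: @Ordinal 3 0 isT; @Ordinal 3 1 isT; @Ordinal 3 2 isT].
Definition all_cols_l (l : seq 'I_3) (P : col -> bool) :=
  all (fun a => all (fun b => all (fun c => all (fun d => all (fun e => all (fun f =>
     P (Col a b c d e f)) l) l) l) l) l) l.
Definition all_cols := all_cols_l ord3.
Definition check_col (T : trie) (e : col) : bool :=
  let c0 := cov e 0 in let c1 := cov e 1 in let c2 := cov e 2 in let k := ccost e in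
  (match stepc init c0 c1 c2 with
   | Some s' => match tget T (encode s') with Some v' => OFF + 2 <= k + v' | None => false end
   | None => false end) &&
  tall (fun key v => match stepc (decode key) c0 c1 c2 with
        | None => true
        | Some s' => match tget T (encode s') with None => false | Some v' => v + 1 <= k + v' end end) T.
Definition check_all (T : trie) :=
  all_cols (check_col T) && tall (fun key v => accept (decode key) ==> (v <= OFF)) T.


Lemma check_ok : check_all table = true.
Proof. vm_compute. reflexivity. Qed.

Definition Z0 : 'I_3 := @Ordinal 3 0 isT.
Definition Zc := Col Z0 Z0 Z0 Z0 Z0 Z0.
Definition W (a b c d e : col) :=
  bor (cov a 2) (bor (cov b 1) (bor (cov c 0) (bor (cov d 1) (cov e 2)))).
Definition alpha (a b c d : col) :=
  St (bcompl (bor (cov a 2) (bor (cov b 1) (bor (cov c 0) (cov d 1)))))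
     (bcompl (bor (cov b 2) (bor (cov c 1) (cov d 0))))
     (bor (cov c 2) (cov d 1)) (cov d 2).

Lemma covZ d : cov Zc d = bempty.
Proof. by []. Qed.

Lemma borA x y z : bor x (bor y z) = bor (bor x y) z.
Proof. by case: x y z => ? ? ? ? ? ? [? ? ? ? ? ?] [? ? ? ? ? ?]; rewrite /bor /= !orbA. Qed.
Lemma bor0 x : bor x bempty = x.
Proof. by case: x => ? ? ? ? ? ?; rewrite /bor /= !orbF. Qed.
Lemma bor0l x : bor bempty x = x.
Proof. by case: x. Qed.
Lemma bdiffC x y : bdiff (bcompl x) y = bcompl (bor x y).
Proof. by case: x y => ? ? ? ? ? ? [? ? ? ? ? ?]; rewrite /bor /bdiff /bcompl /= !negb_or. Qed.
Lemma bsubC x y : bsub (bcompl x) y = isfull (bor x y).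
Proof. by case: x y => ? ? ? ? ? ? [? ? ? ? ? ?]; rewrite /bsub /isfull /= !implyNb. Qed.
Lemma emptyC x : isempty (bcompl x) = isfull x.
Proof.
by case: x => [[] [] [] [] [] []].
Qed.

Lemma step_alpha a b c d e :
  step (alpha a b c d) e = if isfull (W a b c d e) then Some (alpha b c d e) else None.
Proof.
rewrite /step /stepc /alpha /W /= bsubC -?borA.
case: ifP => // _; by rewrite !bdiffC -?borA.
Qed.

Fixpoint domWin (x : seq col) : bool :=
  match x with
  | a :: x' => match x' with
               | b :: c :: d :: e :: _ => isfull (W a b c d e) && domWin x'
               | _ => true end
  | [::] => true end.

Definition arun_ok s l := if arun s l is Some s' then accept s' else false.

Lemma accept_alpha a b c d :
  accept (alpha a b c d) = isfull (W a b c d Zc) && isfull (W b c d Zc Zc).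
Proof.
by rewrite /accept /alpha /W /= !emptyC !covZ ?bor0 -?borA.
Qed.

Lemma run_alpha l a b c d :
  arun_ok (alpha a b c d) l = domWin (a :: b :: c :: d :: l ++ [:: Zc; Zc]).
Proof.
elim: l a b c d => [|e l IH] a b c d.
  by rewrite /arun_ok /= accept_alpha andbT.
rewrite /arun_ok /= step_alpha; case: ifP => _ //.
exact: IH.
Qed.

Lemma run_init c0 c1 l :
  arun_ok init (c0 :: c1 :: l) = arun_ok (alpha Zc Zc c0 c1) l.
Proof.
rewrite /arun_ok /= /step /stepc /=.
by rewrite /alpha !covZ !bor0l bdiffC.
Qed.

Lemma tall_get t P k v : tall P t -> tget t k = Some v -> P k v.
Proof.
elim: t P k => [o|l IHl r IHr] P k /=.
  by case: k => // H; case: o H => // w H [<-].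
case: k => // b k /andP [Hl Hr]; case: b => H.
  exact: (IHr (fun k => P (true :: k))).
exact: (IHl (fun k => P (false :: k))).
Qed.

Lemma decode_encode s : decode (encode s) = s.
Proof. by case: s => [[? ? ? ? ? ?] [? ? ? ? ? ?] [? ? ? ? ? ?] [? ? ? ? ? ?]]. Qed.

Lemma mem_ord3 (k : 'I_3) : k \in ord3.
Proof. by case: k => [[|[|[|n]]] Hk] //; rewrite !inE. Qed.

Lemma all_cols_l_spec (l : seq 'I_3) P : (forall k, k \in l) -> all_cols_l l P -> forall e, P e.
Proof.
move=> Hl H [a b c d e f].
move/allP: H => /(_ a (Hl a)) /allP /(_ b (Hl b)) /allP /(_ c (Hl c))
  /allP /(_ d (Hl d)) /allP /(_ e (Hl e)) /allP /(_ f (Hl f)).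
done.
Qed.

Lemma all_cols_spec P : all_cols P -> forall e, P e.
Proof.
move=> H e; exact: (@all_cols_l_spec ord3 P mem_ord3 H e).
Qed.

Definition costL (l : seq col) := sumn (map ccost l).

Section Pot.
Variable T : trie.
Hypothesis HT : check_all T = true.
Lemma checkP1 e : check_col T e.
Proof.
have := HT; rewrite /check_all => /andP [H _]; exact: all_cols_spec H e.
Qed.

Lemma checkP2 : tall (fun key v => accept (decode key) ==> (v <= OFF)) T.
Proof. by have := HT; rewrite /check_all => /andP [_ H]. Qed.

Lemma pot l s sf v : tget T (encode s) = Some v -> arun s l = Some sf -> accept sf ->
  v + size l <= costL l + OFF.
Proof.
elim: l s v => [|e l IH] s v Hv /=.
  case=> <- Hacc; have := tall_get checkP2 Hv; rewrite decode_encode Hacc /=.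
  by rewrite addn0.
case Hs: (step s e) => [s'|] // Hrun Hacc.
have := checkP1 e; rewrite /check_col => /andP [_ H].
have := tall_get H Hv; rewrite decode_encode.
rewrite /step in Hs; rewrite Hs.
case Hv': (tget T (encode s')) => [v'|] // Hle.
have := IH s' v' Hv' Hrun Hacc.
rewrite /costL /= -/(costL l). lia.
Qed.

Lemma lower_list cs : 1 <= size cs -> arun_ok init cs -> size cs + 1 <= costL cs.
Proof.
case: cs => // e l _.
set s' := St (bdiff bempty (cov e 1)) (bcompl (bor bempty (cov e 0))) (bor bempty (cov e 1)) (cov e 2).
have E1 : arun_ok init (e :: l) = arun_ok s' l by [].
have E2 : stepc init (cov e 0) (cov e 1) (cov e 2) = Some s' by [].
have := checkP1 e; rewrite /check_col E2 => /andP [H _].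
rewrite E1 /arun_ok.
case Hv: (tget T (encode s')) H => [v'|] // Hle.
case Hr: (arun s' l) => [sf|] // Hacc.
have := pot Hv Hr Hacc.
rewrite /costL /= -/(costL l) /OFF. rewrite /OFF in Hle. lia.
Qed.
End Pot.

Lemma lower_list_tbl cs : 1 <= size cs -> arun_ok init cs -> size cs + 1 <= costL cs.
Proof. exact: (lower_list check_ok). Qed.

Lemma domWin5 a b c d e y : domWin [:: a, b, c, d, e & y] = isfull (W a b c d e) && domWin [:: b, c, d, e & y].
Proof. by []. Qed.

Lemma domWin_nth x : domWin x = all (fun j => isfull (W (nth Zc x j) (nth Zc x j.+1)
   (nth Zc x j.+2) (nth Zc x j.+3) (nth Zc x j.+4))) (iota 0 (size x - 4)).
Proof.
elim: x => [|a x IH] //.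
case: x IH => [|b [|c [|d [|e y]]]] IH //.
rewrite domWin5 IH.
have -> : size [:: a, b, c, d, e & y] - 4 = (size [:: b, c, d, e & y] - 4).+1 by rewrite /=; lia.
rewrite -[(_ - 4).+1]addn1 addnC iotaD /=; congr andb.
have -> : forall n, iota 1 n = map succn (iota 0 n) by move=> n; exact: (iotaDl 1 0 n).
by rewrite all_map.
Qed.

Definition cadj (a b : nat) := (a.+1 %% 6 == b) || (b.+1 %% 6 == a).
Definition i6 := iota 0 6.

Lemma F1b : all (fun a => all (fun b => cadj a b == (cd a b == 1)) i6) i6. Proof. by []. Qed.
Lemma F2b : all (fun a => all (fun b => (a == b) == (cd a b == 0)) i6) i6. Proof. by []. Qed.
Lemma F3b : all (fun a => all (fun b => all (fun c => cd a c <= cd a b + cd b c) i6) i6) i6.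
Proof. by []. Qed.
Lemma F4b : all (fun a => all (fun b => (cd a b == 2) ==> has (fun c => (cd a c == 1) && (cd c b == 1)) i6) i6) i6.
Proof. by []. Qed.
Lemma F5b : all (fun a => all (fun b => cd a b == cd b a) i6) i6. Proof. by []. Qed.

Lemma in6 (a : 'I_6) : (a : nat) \in i6.
Proof. by rewrite mem_iota /=. Qed.

Lemma F1 (a b : 'I_6) : cycle_adj a b = (cd a b == 1).
Proof. by have /allP/(_ _ (in6 a))/allP/(_ _ (in6 b))/eqP := F1b. Qed.
Lemma F2 (a b : 'I_6) : (a == b) = (cd a b == 0).
Proof. by have /allP/(_ _ (in6 a))/allP/(_ _ (in6 b))/eqP := F2b. Qed.
Lemma F3 (a b c : 'I_6) : cd a c <= cd a b + cd b c.
Proof. by have /allP/(_ _ (in6 a))/allP/(_ _ (in6 b))/allP/(_ _ (in6 c)) := F3b. Qed.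
Lemma F4 (a b : 'I_6) : cd a b = 2 -> exists c : 'I_6, cd a c = 1 /\ cd c b = 1.
Proof.
move=> H; have /allP/(_ _ (in6 a))/allP/(_ _ (in6 b)) := F4b.
rewrite H eqxx implyTb => /hasP [c]; rewrite mem_iota add0n => /andP [_ Hc] /andP [/eqP h1 /eqP h2].
by exists (Ordinal Hc).
Qed.
Lemma F5 (a b : 'I_6) : cd a b = cd b a.
Proof. by apply/eqP; have /allP/(_ _ (in6 a))/allP/(_ _ (in6 b)) := F5b. Qed.

Lemma within_S (V : finType) (e : rel V) k u v :
  within e k.+1 u v = within e k u v || [exists w, e u w && within e k w v].
Proof. by []. Qed.

Section G.
Variable m : nat.
Definition D (v u : 'I_m * 'I_6) := absd v.1 u.1 + cd v.2 u.2.

Lemma D0 v u : (v == u) = (D v u == 0).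
Proof.
case: v u => [i a] [j b]; rewrite /D /=.
rewrite -pair_eqE /= F2.
apply/idP/idP.
  move=> /andP [/eqP -> /eqP ->]; rewrite /absd subnn. done.
rewrite addn_eq0 => /andP [H1 ->]; rewrite andbT; apply/eqP; apply: val_inj => /=.
move: H1; rewrite /absd; lia.
Qed.

Lemma eD v u : PmC6 m v u = (D v u == 1).
Proof.
case: v u => [i a] [j b]; rewrite /PmC6 /cartesian /D /= F1 F2.
have -> : (i == j) = (absd i j == 0) by rewrite /absd; apply/eqP/eqP; [move=> ->; lia | move=> H; apply: ord_inj; lia].
rewrite /path_adj.
have -> : ((i.+1 == j :> nat) || (j.+1 == i :> nat)) = (absd i j == 1).
  by rewrite /absd; apply/idP/idP; [case/orP => /eqP; lia | move/eqP => H; apply/orP; lia].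
apply/idP/idP.
  by case/orP => /andP [/eqP -> /eqP ->].
move/eqP => H.
have [[-> ->]|[-> ->]] : (absd i j = 0 /\ cd a b = 1) \/ (absd i j = 1 /\ cd a b = 0) by lia.
  by []. by [].
Qed.

Lemma within1 v u : within (PmC6 m) 1 v u = (D v u <= 1).
Proof.
rewrite /= D0.
have -> : [exists w, PmC6 m v w && (w == u)] = PmC6 m v u.
  apply/existsP/idP; first by case=> w /andP [H /eqP <-].
  by move=> H; exists u; rewrite H eqxx.
rewrite eD; lia.
Qed.

Lemma Dtri v w u : D v u <= D v w + D w u.
Proof. rewrite /D; have := F3 v.2 w.2 u.2; rewrite /absd; lia. Qed.

Lemma within2 v u : within (PmC6 m) 2 v u = (D v u <= 2).
Proof.
rewrite within_S within1.
apply/idP/idP.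
  case/orP; first lia.
  case/existsP => w /andP []; rewrite eD within1 => /eqP H1 H2.
  have := Dtri v w u; lia.
move=> H; apply/orP; case: (leqP (D v u) 1) => H1; [by left | right].
have HD : D v u = 2 by lia.
case: v u H HD {H1} => [i a] [j b] _ HD; rewrite /D /= in HD.
case: (posnP (absd i j)) => Hij.
  have [c [Hc1 Hc2]] : exists c : 'I_6, cd a c = 1 /\ cd c b = 1 by apply: F4; lia.
  apply/existsP; exists (i, c); rewrite eD within1 /D /= Hc1 Hc2 /absd subnn /=.
  move: Hij; rewrite /absd => Hij; lia.
have Hlt : (if i < j then i.+1 else i.-1) < m.
  case: ifP => Hi; [exact: leq_ltn_trans Hi (ltn_ord j) | exact: leq_ltn_trans (leq_pred _) (ltn_ord i)].
apply/existsP; exists (Ordinal Hlt, a); rewrite eD within1 /D /=.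
have -> : cd a a = 0 by apply/eqP; rewrite -F2.
move: Hij HD; rewrite /absd; case: ifP => Hi; lia.
Qed.
End G.

Definition bit (x : bs) (r : nat) :=
  match r with 0 => b0 x | 1 => b1 x | 2 => b2 x | 3 => b3 x | 4 => b4 x | _ => b5 x end.
Lemma bit_or x y r : bit (bor x y) r = bit x r || bit y r.
Proof. by case: r => [|[|[|[|[|r]]]]]. Qed.

Definition o6 (k : nat) : 'I_6 := inord k.
Definition o5 (k : nat) : 'I_5 := inord k.

Lemma exists6 (P : 'I_6 -> bool) :
  [exists s, P s] = [|| P (o6 0), P (o6 1), P (o6 2), P (o6 3), P (o6 4) | P (o6 5)].
Proof.
apply/existsP/idP.
  move=> [s H]; have Hs : s = o6 s by apply: val_inj; rewrite /o6 /= inordK.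
  rewrite Hs in H; case: s Hs H => [[|[|[|[|[|[|k]]]]]] Hk] _ H //=; by rewrite H ?orbT.
by case/orP => [H|/orP [H|/orP [H|/orP [H|/orP [H|H]]]]]; eexists; exact: H.
Qed.

Lemma exists5 (P : 'I_5 -> bool) :
  [exists s, P s] = [|| P (o5 0), P (o5 1), P (o5 2), P (o5 3) | P (o5 4)].
Proof.
apply/existsP/idP.
  move=> [s H]; have Hs : s = o5 s by apply: val_inj; rewrite /o5 /= inordK.
  rewrite Hs in H; case: s Hs H => [[|[|[|[|[|k]]]]] Hk] _ H //=; by rewrite H ?orbT.
by case/orP => [H|/orP [H|/orP [H|/orP [H|H]]]]; eexists; exact: H.
Qed.

Definition B (x : col) (d r : nat) := [exists s : 'I_6, near (get x s) (d + cd s r)].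

Lemma get_o6 x k : k < 6 -> get x (o6 k) = get x k.
Proof. by move=> Hk; rewrite /o6 /= inordK. Qed.

Lemma bit_cov x d r : r < 6 -> bit (cov x d) r = B x d r.
Proof.
move=> Hr; rewrite /B exists6 !get_o6 // /o6 !inordK //.
by case: r Hr => [|[|[|[|[|[|r]]]]]].
Qed.

Definition dd (k : nat) := absd k 2.

Lemma bit_W a b c d e r : r < 6 -> bit (W a b c d e) r =
  [exists k : 'I_5, B (nth Zc [:: a; b; c; d; e] k) (dd k) r].
Proof.
move=> Hr; rewrite /W !bit_or !bit_cov // exists5 /o5 !inordK //.
Qed.

Section F.
Variable m : nat.
Variable f : {ffun 'I_m * 'I_6 -> 'I_3}.

Lemma hears_near u v : hears (PmC6 m) f u v = near (f v) (D v u).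
Proof.
rewrite /hears /near; case: (f v) => [n Hn]; change (nat_of_ord (Ordinal Hn)) with n.
case: n Hn => [|[|[|k]]] Hk //.
  by rewrite within1.
by rewrite within2.
Qed.

Definition getc (j : nat) : col :=
  if insub j is Some i then
    Col (f (i, o6 0)) (f (i, o6 1)) (f (i, o6 2)) (f (i, o6 3)) (f (i, o6 4)) (f (i, o6 5))
  else Zc.
Definition csf := mkseq getc m.

Lemma getcE (i : 'I_m) (s : 'I_6) : get (getc i) s = f (i, s).
Proof.
rewrite /getc valK.
case: s => [[|[|[|[|[|[|k]]]]]] Hk] //=; congr (f (_, _)); apply: val_inj; by rewrite /= inordK.
Qed.

Lemma getcZ j : m <= j -> getc j = Zc.
Proof. by move=> H; rewrite /getc insubF // ltnNge H. Qed.

Definition padx := [:: Zc, Zc & csf ++ [:: Zc; Zc]].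

Lemma padE k : nth Zc padx k = if k < 2 then Zc else getc (k - 2).
Proof.
case: k => [|[|k]] //=; rewrite subn2 /= nth_cat size_mkseq.
case: ifP => Hk; first by rewrite nth_mkseq.
rewrite getcZ; last by rewrite leqNgt Hk.
by case: (k - m) => [|[|n]] //=; rewrite nth_nil.
Qed.

Lemma getZ s : get Zc s = Z0.
Proof. by case: s => [|[|[|[|[|s]]]]]. Qed.

Lemma nth5 (j k : nat) : k < 5 ->
  nth Zc [:: nth Zc padx j; nth Zc padx j.+1; nth Zc padx j.+2; nth Zc padx j.+3; nth Zc padx j.+4] k
  = nth Zc padx (j + k).
Proof. by case: k => [|[|[|[|[|n]]]]] //; rewrite ?addn0 ?addn1 ?addn2 ?addn3 ?addn4. Qed.

Lemma point (j : 'I_m) (r : 'I_6) :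
  [exists v, hears (PmC6 m) f (j, r) v] =
  bit (W (nth Zc padx j) (nth Zc padx j.+1) (nth Zc padx j.+2) (nth Zc padx j.+3) (nth Zc padx j.+4)) r.
Proof.
rewrite bit_W //.
apply/existsP/existsP.
  case=> [[i s]]; rewrite hears_near /D /= => Hn.
  have Hd : absd i j <= 2.
    move: Hn; rewrite /near; case: (f (i, s)) => [k Hk] /= /andP [_]; lia.
  have Hk : i + 2 - j < 5 by move: Hd; rewrite /absd; lia.
  exists (Ordinal Hk); rewrite /B; apply/existsP; exists s.
  rewrite [nat_of_ord (Ordinal Hk)]/= nth5 //.
  have -> : j + (i + 2 - j) = i + 2 by move: Hd; rewrite /absd; lia.
  rewrite padE ifN; last by lia.
  rewrite addnK getcE.
  have -> : dd (Ordinal Hk) = absd i j by rewrite /dd /absd /=; move: Hd; rewrite /absd; lia.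
  by [].
case=> [[k Hk]]; rewrite /B => /existsP [s].
rewrite [nat_of_ord (Ordinal Hk)]/= nth5 //.
rewrite padE; case: ifP => H1; first by rewrite getZ.
case: (ltnP (j + k - 2) m) => H2; last by rewrite getcZ // getZ.
rewrite (_ : j + k - 2 = Ordinal H2) // getcE => Hn.
exists (Ordinal H2, s); rewrite hears_near /D /=.
have -> : absd (j + k - 2) j = dd k by rewrite /dd /absd; move: H1; lia.
done.
Qed.

Lemma isfullE x : isfull x = [forall r : 'I_6, bit x r].
Proof.
apply/idP/forallP.
  by move/andP=> [H0 /andP [H1 /andP [H2 /andP [H3 /andP [H4 H5]]]]] [[|[|[|[|[|[|r]]]]]] Hr].
move=> H; have := H (o6 0); have := H (o6 1); have := H (o6 2); have := H (o6 3);
  have := H (o6 4); have := H (o6 5); rewrite /o6 !inordK //=.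
by clear H; case: x => [] [] [] [] [] [].
Qed.

Lemma dom_win : dominating (PmC6 m) f = domWin padx.
Proof.
rewrite domWin_nth.
have -> : size padx - 4 = m by rewrite /padx /= size_cat size_mkseq /=; lia.
apply/forallP/allP.
  move=> H j; rewrite mem_iota add0n => /andP [_ Hj].
  rewrite isfullE; apply/forallP => r.
  have := H (Ordinal Hj, r); by rewrite point.
move=> H [j r]; rewrite point.
have := H j; rewrite mem_iota add0n ltn_ord => /(_ isT); rewrite isfullE => /forallP; apply.
Qed.

Lemma dom_run : 2 <= m -> dominating (PmC6 m) f = arun_ok init csf.
Proof.
move=> Hm; rewrite dom_win /padx.
case Hc: csf => [|c0 [|c1 l]].
- by move: (size_mkseq getc m); rewrite -/csf Hc /=; lia.
- by move: (size_mkseq getc m); rewrite -/csf Hc /=; lia.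
by rewrite run_init run_alpha.
Qed.

Lemma ccost_sum c : ccost c = \sum_(s < 6) (get c s : nat).
Proof. by rewrite !big_ord_recl big_ord0 /= /ccost !addnA addn0. Qed.

Lemma cost_csf : cost f = costL csf.
Proof.
rewrite /cost /costL /csf.
rewrite (eq_bigr (fun p => (f (p.1, p.2) : nat))); last by case.
rewrite -(pair_big xpredT xpredT (fun i s => (f (i, s) : nat))) /=.
rewrite /mkseq -map_comp sumnE big_map.
have -> : iota 0 m = index_iota 0 m by rewrite /index_iota subn0.
rewrite big_mkord.
apply: eq_bigr => i _; rewrite /= ccost_sum; apply: eq_bigr => s _; by rewrite getcE.
Qed.
End F.

Definition O1 : 'I_3 := @Ordinal 3 1 isT.
Definition O2 : 'I_3 := @Ordinal 3 2 isT.
Definition T0 := Col O2 Z0 Z0 Z0 Z0 Z0.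
Definition T3 := Col Z0 Z0 Z0 O2 Z0 Z0.
Definition X0 := Col Z0 Z0 Z0 O1 Z0 Z0.
Definition Y0 := Col O1 Z0 Z0 Z0 Z0 Z0.
Definition gen (j : nat) := match j %% 4 with 1 => T0 | 3 => T3 | _ => Zc end.
Definition body n := mkseq (fun i => gen i.+1) n.
Definition S0 := odflt init (step init X0).
Definition S1 := odflt init (step S0 T0).
Definition S2 := odflt init (step S1 Zc).
Definition S3 := odflt init (step S2 T3).
Definition cyc n := match n %% 4 with 0 => S0 | 1 => S1 | 2 => S2 | _ => S3 end.

Lemma arun_rcons s l e : arun s (rcons l e) = if arun s l is Some s' then step s' e else None.
Proof.
elim: l s => [|x l IH] s /=; first by case: (step s e).
by case: (step s x).
Qed.

Lemma body_run n : arun S0 (body n) = Some (cyc n).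
Proof.
elim: n => [|n IH]; first by [].
rewrite /body mkseqS arun_rcons -/(body n) IH /cyc /gen.
have -> : n.+1 %% 4 = (n %% 4).+1 %% 4 by rewrite -addn1 -modnDml addn1.
have : n %% 4 < 4 by rewrite ltn_mod.
by case: (n %% 4) => [|[|[|[|k]]]] //; vm_compute.
Qed.

Lemma costL_rcons l e : costL (rcons l e) = costL l + ccost e.
Proof. by rewrite /costL -cats1 map_cat sumn_cat /= addn0. Qed.

Lemma body_cost n : costL (body n) = n + odd n.
Proof.
elim: n => [|n IH]; first by [].
rewrite /body mkseqS costL_rcons -/(body n) IH /gen.
have -> : n.+1 %% 4 = (n %% 4).+1 %% 4 by rewrite -addn1 -modnDml addn1.
have H4 : n %% 4 < 4 by rewrite ltn_mod.
have Ho : odd n = odd (n %% 4) by rewrite odd_mod.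
rewrite /= Ho.
by case: (n %% 4) H4 => [|[|[|[|k]]]] //= _; rewrite /ccost /=; lia.
Qed.

Definition cs0 m := if odd m then X0 :: body (m - 2) ++ [:: if m %% 4 == 3 then X0 else Y0]
                    else X0 :: body (m - 1).

Lemma cs0_size m : 2 <= m -> size (cs0 m) = m.
Proof.
move=> Hm; rewrite /cs0; case: ifP => _ /=; rewrite ?size_cat /= /body size_mkseq; lia.
Qed.

Lemma costL_cons e l : costL (e :: l) = ccost e + costL l.
Proof. by []. Qed.
Lemma costL_cat l1 l2 : costL (l1 ++ l2) = costL l1 + costL l2.
Proof. by rewrite /costL map_cat sumn_cat. Qed.

Lemma cs0_cost m : 2 <= m -> costL (cs0 m) = m + 1.
Proof.
move=> Hm; rewrite /cs0; case: ifP => Ho.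
  rewrite costL_cons costL_cat body_cost.
  have -> : odd (m - 2) = true by rewrite oddB // Ho.
  case: ifP => _; rewrite /costL /ccost /=; lia.
rewrite costL_cons body_cost.
have -> : odd (m - 1) = true by rewrite oddB ?Ho //; lia.
rewrite /ccost /=; lia.
Qed.

Lemma arun_cons s e l : arun s (e :: l) = if step s e is Some s' then arun s' l else None.
Proof. by []. Qed.

Lemma cs0_run m : 2 <= m -> arun_ok init (cs0 m).
Proof.
move=> Hm; rewrite /cs0; case: ifP => Ho.
  rewrite /arun_ok arun_cons (_ : step init X0 = Some S0) //.
  rewrite cats1 arun_rcons body_run /cyc.
  have : (m - 2) %% 4 = 1 \/ (m - 2) %% 4 = 3.
    have : odd ((m - 2) %% 4) by rewrite (odd_mod _ (erefl : odd 4 = false)) oddB // Ho.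
    have : (m - 2) %% 4 < 4 by rewrite ltn_mod.
    case: ((m - 2) %% 4) => [|[|[|[|k]]]] //; auto.
  have Hm4 : m %% 4 = ((m - 2) %% 4 + 2) %% 4.
    by rewrite modnDml subnK.
  rewrite Hm4.
  by case=> ->; vm_compute.
rewrite /arun_ok arun_cons (_ : step init X0 = Some S0) // body_run /cyc.
have : (m - 1) %% 4 = 1 \/ (m - 1) %% 4 = 3.
  have : odd ((m - 1) %% 4) by rewrite (odd_mod _ (erefl : odd 4 = false)) oddB ?Ho //; lia.
  have : (m - 1) %% 4 < 4 by rewrite ltn_mod.
  case: ((m - 1) %% 4) => [|[|[|[|k]]]] //; auto.
by case=> ->; vm_compute.
Qed.

Lemma lower_f m (f : {ffun 'I_m * 'I_6 -> 'I_3}) : 2 <= m -> dominating (PmC6 m) f -> m + 1 <= cost f.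
Proof.
move=> Hm Hd; rewrite cost_csf; rewrite dom_run // in Hd.
have := lower_list_tbl _ Hd; rewrite /csf size_mkseq; apply; lia.
Qed.

Definition f0 m : {ffun 'I_m * 'I_6 -> 'I_3} := [ffun v : 'I_m * 'I_6 => get (nth Zc (cs0 m) v.1) v.2].

Lemma csf_f0 m : 2 <= m -> csf (f0 m) = cs0 m.
Proof.
move=> Hm; apply: (@eq_from_nth _ Zc); first by rewrite size_mkseq cs0_size.
move=> i; rewrite size_mkseq => Hi; rewrite nth_mkseq // /getc insubT /= !ffunE /=.
rewrite !get_o6 //.
by case: (nth Zc (cs0 m) i).
Qed.

Lemma bigmin_le (I : finType) (P : pred I) (F : I -> nat) idx j :
  P j -> \big[minn/idx]_(i | P i) F i <= F j.
Proof.
move=> Pj; have : j \in index_enum I by rewrite mem_index_enum.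
elim: (index_enum I) => [|x r IH] //; rewrite inE big_cons => /orP [/eqP <-|jr].
  by rewrite Pj geq_minl.
case: ifP => _; [exact: leq_trans (geq_minr _ _) (IH jr) | exact: IH jr].
Qed.

Lemma gamma_eq m : 2 <= m -> gamma_b2 (PmC6 m) = m + 1.
Proof.
move=> Hm; apply/eqP; rewrite eqn_leq; apply/andP; split.
  have Hd : dominating (PmC6 m) (f0 m) by rewrite dom_run // csf_f0 // cs0_run.
  rewrite /gamma_b2. apply: leq_trans (bigmin_le (fun f => cost f) _ Hd) _.
  by rewrite cost_csf csf_f0 // cs0_cost.
rewrite /gamma_b2; apply: (big_ind (fun x => m + 1 <= x)).
- by rewrite card_prod !card_ord; lia.
- by move=> x y Hx Hy; rewrite leq_min Hx Hy.
- by move=> f Hf; exact: lower_f.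
Qed.

Unset Implicit Arguments.
Theorem corollary4p8 (m : nat) : 3 <= m ->
  (m %% 4 = 0 -> gamma_b2 (PmC6 m) = m \/ gamma_b2 (PmC6 m) = m + 1) /\
  (m %% 4 <> 0 -> gamma_b2 (PmC6 m) = m + 1).
Proof.
move=> Hm; have H := gamma_eq (ltnW Hm); split => _; [by right | exact: H].
Qed.
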